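(* Let $(X,d)$ be a compact metric space and $f_{1,\infty}$ a commutative $m$-periodic sequence of continuous surjective self-maps of $X$. If $(X,f_{1,\infty})$ is weakly mixing, then it is totally transitive.
   Context: Commutative: $f_i\circ f_j=f_j\circ f_i$ for all $i,j$. $m$-periodic: $f_{n+m}=f_n$ for all $n$. Write $f_1^n=f_n\circ\cdots\circ f_1$ and $f_{1,\infty}^{[k]}=\{f_{k(n-1)+1}^k\}_{n\ge1}$ with $f_n^i=f_{n+i-1}\circ\cdots\circ f_n$. Weakly mixing: for all non-empty open $U_1,U_2,V_1,V_2$ there is $n$ with $f_1^n(U_i)\cap V_i\ne\emptyset$, $i=1,2$. Topologically transitive: for all non-empty open $U,V$ some $n$ with $f_1^n(U)\cap V\ne\emptyset$. Totally transitive: $(X,f_{1,\infty}^{[k]})$ is topologically transitive for every $k\ge1$. *)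

(* Defs.v *)
From Stdlib Require Import Reals List.
Open Scope R_scope.

Definition is_metric {X : Type} (d : X -> X -> R) : Prop :=
  (forall x y, 0 <= d x y) /\
  (forall x y, d x y = 0 <-> x = y) /\
  (forall x y, d x y = d y x) /\
  (forall x y z, d x z <= d x y + d y z).

Definition is_open {X : Type} (d : X -> X -> R) (U : X -> Prop) : Prop :=
  forall x, U x -> exists eps, 0 < eps /\ forall y, d x y < eps -> U y.

Definition nonempty {X : Type} (U : X -> Prop) : Prop := exists x, U x.

Definition compact_space {X : Type} (d : X -> X -> R) : Prop :=
  forall (I : Type) (U : I -> X -> Prop),
    (forall i, is_open d (U i)) -> (forall x, exists i, U i x) ->
    exists l : list I, forall x, exists i, In i l /\ U i x.

Definition continuous {X : Type} (d : X -> X -> R) (g : X -> X) : Prop :=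
  forall x eps, 0 < eps -> exists delta, 0 < delta /\
    forall y, d x y < delta -> d (g x) (g y) < eps.

Definition surjective {X : Type} (g : X -> X) : Prop := forall y, exists x, g x = y.

(* Sequences of maps are 0-indexed: [f i] stands for the paper's f_{i+1}. *)

(* fcomp f k n = f_{k+n-1} o ... o f_k  (0-indexed; fcomp f k 0 = id).
   With this indexing, the paper's f_{k+1}^n is fcomp f k n and f_1^n is fcomp f 0 n. *)
Fixpoint fcomp {X : Type} (f : nat -> X -> X) (k n : nat) (x : X) : X :=
  match n with
  | O => x
  | S n' => f (k + n')%nat (fcomp f k n' x)
  end.

Definition commutative_seq {X : Type} (f : nat -> X -> X) : Prop :=
  forall i j x, f i (f j x) = f j (f i x).

Definition periodic_seq {X : Type} (f : nat -> X -> X) (m : nat) : Prop :=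
  forall n x, f (n + m)%nat x = f n x.

Definition meets {X : Type} (f : nat -> X -> X) (n : nat) (U V : X -> Prop) : Prop :=
  exists x, U x /\ V (fcomp f 0 n x).

Definition weakly_mixing {X : Type} (d : X -> X -> R) (f : nat -> X -> X) : Prop :=
  forall U1 U2 V1 V2 : X -> Prop,
    is_open d U1 -> is_open d U2 -> is_open d V1 -> is_open d V2 ->
    nonempty U1 -> nonempty U2 -> nonempty V1 -> nonempty V2 ->
    exists n, (1 <= n)%nat /\ meets f n U1 V1 /\ meets f n U2 V2.

Definition top_transitive {X : Type} (d : X -> X -> R) (f : nat -> X -> X) : Prop :=
  forall U V : X -> Prop,
    is_open d U -> is_open d V -> nonempty U -> nonempty V ->
    exists n, (1 <= n)%nat /\ meets f n U V.

(* f_{1,oo}^{[k]}: its n-th map (paper index n >= 1) is f_{k(n-1)+1}^k;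
   0-indexed: block f k i = f_{k i + 1}^k = fcomp f (k*i) k. *)
Definition block {X : Type} (f : nat -> X -> X) (k : nat) : nat -> X -> X :=
  fun i => fcomp f (k * i) k.

Definition totally_transitive {X : Type} (d : X -> X -> R) (f : nat -> X -> X) : Prop :=
  forall k, (1 <= k)%nat -> top_transitive d (block f k).

(* Main.v *)
Require Import Defs.
From Stdlib Require Import Reals List Lia Lra Arith.
Open Scope R_scope.

Lemma fcomp_add {X} (f : nat -> X -> X) s a b x :
  fcomp f s (a + b) x = fcomp f (s + a) b (fcomp f s a x).
Proof.
  induction b as [|b IH]; simpl.
  - now rewrite Nat.add_0_r.
  - rewrite Nat.add_succ_r; simpl. rewrite IH, Nat.add_assoc. reflexivity.
Qed.

Lemma f_comm_fcomp {X} (f : nat -> X -> X) : commutative_seq f ->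
  forall i s n x, f i (fcomp f s n x) = fcomp f s n (f i x).
Proof.
  intros Hc i s n; induction n as [|n IH]; intros x; simpl; auto.
  rewrite Hc, IH; auto.
Qed.

Lemma fcomp_comm {X} (f : nat -> X -> X) : commutative_seq f ->
  forall s n s' n' x, fcomp f s n (fcomp f s' n' x) = fcomp f s' n' (fcomp f s n x).
Proof.
  intros Hc s n s' n'; induction n' as [|n' IH]; intros x; simpl; auto.
  rewrite <- IH. symmetry. apply f_comm_fcomp; auto.
Qed.

Lemma fcomp_cont {X} d (f : nat -> X -> X) : (forall i, continuous d (f i)) ->
  forall s n, continuous d (fcomp f s n).
Proof.
  intros Hc s n; induction n as [|n IH]; intros x eps Heps; simpl.
  - exists eps; split; auto.
  - destruct (Hc (s+n)%nat (fcomp f s n x) eps Heps) as [d1 [Hd1 H1]].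
    destruct (IH x d1 Hd1) as [d2 [Hd2 H2]].
    exists d2; split; auto.
Qed.

Lemma fcomp_surj {X} (f : nat -> X -> X) : (forall i, surjective (f i)) ->
  forall s n, surjective (fcomp f s n).
Proof.
  intros Hs s n; induction n as [|n IH]; intros y; simpl.
  - exists y; auto.
  - destruct (Hs (s+n)%nat y) as [z Hz]. destruct (IH z) as [w Hw].
    exists w; congruence.
Qed.

Lemma preimage_open {X} d (g : X -> X) (W : X -> Prop) :
  continuous d g -> is_open d W -> is_open d (fun y => W (g y)).
Proof.
  intros Hg HW x Hx. destruct (HW _ Hx) as [e [He H]].
  destruct (Hg x e He) as [dl [Hdl H2]]. exists dl; split; auto.
Qed.

Lemma inter_open {X} d (A B : X -> Prop) : is_open d A -> is_open d B ->
  is_open d (fun y => A y /\ B y).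
Proof.
  intros HA HB x [Ha Hb]. destruct (HA _ Ha) as [e1 [He1 H1]].
  destruct (HB _ Hb) as [e2 [He2 H2]].
  exists (Rmin e1 e2); split.
  - apply Rmin_pos; auto.
  - intros y Hy; split; [apply H1 | apply H2];
      eapply Rlt_le_trans; eauto; [apply Rmin_l | apply Rmin_r].
Qed.

Lemma per_mod {X} (f : nat -> X -> X) m : (0 < m)%nat -> periodic_seq f m ->
  forall n x, f n x = f (n mod m)%nat x.
Proof.
  intros Hm Hp n x.
  assert (H : forall q r, f (r + q * m)%nat x = f r x).
  { induction q; intros r; simpl. - now rewrite Nat.add_0_r.
    - replace (r + (m + q*m))%nat with ((r + q*m) + m)%nat by lia.
      rewrite Hp; auto. }
  rewrite (Nat.div_mod n m) at 1 by lia.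
  rewrite Nat.add_comm, Nat.mul_comm. apply H.
Qed.

Lemma fcomp_mod {X} (f : nat -> X -> X) m : (0 < m)%nat -> periodic_seq f m ->
  forall t i x, fcomp f t i x = fcomp f (t mod m) i x.
Proof.
  intros Hm Hp t i; induction i as [|i IH]; intros x; simpl; auto.
  rewrite IH. rewrite (per_mod f m Hm Hp (t+i)), (per_mod f m Hm Hp (t mod m + i)).
  rewrite Nat.Div0.add_mod_idemp_l by lia. auto.
Qed.

Lemma block_fcomp {X} (f : nat -> X -> X) k n x :
  fcomp (block f k) 0 n x = fcomp f 0 (k * n) x.
Proof.
  induction n as [|n IH]; simpl.
  - now rewrite Nat.mul_0_r.
  - rewrite IH. unfold block. replace (k * S n)%nat with (k*n + k)%nat by lia.
    rewrite fcomp_add. auto.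
Qed.

Lemma filter_lemma {X} d (f : nat -> X -> X) :
  (forall i, continuous d (f i)) -> commutative_seq f -> weakly_mixing d f ->
  forall l : list ((X -> Prop) * (X -> Prop)),
  (forall p, In p l -> is_open d (fst p) /\ is_open d (snd p) /\
      nonempty (fst p) /\ nonempty (snd p)) ->
  (exists x : X, True) ->
  exists A B, is_open d A /\ is_open d B /\ nonempty A /\ nonempty B /\
    forall t, meets f t A B -> forall p, In p l -> meets f t (fst p) (snd p).
Proof.
  intros Hc Hcom Hw l; induction l as [|[U V] l IH]; intros Hl [x0 _].
  - exists (fun _ => True), (fun _ => True).
    split; [|split; [|split; [|split]]].
    + intros x _; exists 1; split; [lra | auto].
    + intros x _; exists 1; split; [lra | auto].
    + exists x0; auto.
    + exists x0; auto.
    + intros t _ p [].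
  - destruct IH as [A [B [HA [HB [[a Ha] [[b Hb] Himp]]]]]].
    { intros p Hp; apply Hl; right; auto. }
    { exists x0; auto. }
    destruct (Hl (U,V) (or_introl eq_refl)) as [HU [HV [HnU HnV]]]; simpl in *.
    destruct (Hw A B U V HA HB HU HV (ex_intro _ a Ha) (ex_intro _ b Hb) HnU HnV)
      as [n [_ [[y [Hy1 Hy2]] [z [Hz1 Hz2]]]]].
    exists (fun x => A x /\ U (fcomp f 0 n x)), (fun x => B x /\ V (fcomp f 0 n x)).
    split; [|split; [|split; [|split]]].
    + apply inter_open; auto. apply preimage_open; auto. apply fcomp_cont; auto.
    + apply inter_open; auto. apply preimage_open; auto. apply fcomp_cont; auto.
    + exists y; auto.
    + exists z; auto.
    + intros t [x [[Hx1 Hx2] [Hx3 Hx4]]] p [Hp|Hp].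
      * subst p; simpl. exists (fcomp f 0 n x); split; auto.
        rewrite fcomp_comm; auto.
      * apply Himp; auto. exists x; auto.
Qed.

Lemma div_up k t : (1 <= k)%nat -> (1 <= t)%nat ->
  exists i q, (i < k)%nat /\ (t + i = k * q)%nat /\ (1 <= q)%nat.
Proof.
  intros Hk Ht.
  pose proof (Nat.div_mod t k ltac:(lia)) as E.
  pose proof (Nat.mod_upper_bound t k ltac:(lia)) as B.
  set (q0 := (t / k)%nat) in *. set (r := (t mod k)%nat) in *.
  destruct (Nat.eq_dec r 0) as [Hr|Hr].
  - exists 0%nat, q0. repeat split; try lia.

  - exists (k - r)%nat, (q0 + 1)%nat. repeat split; try lia.
Qed.

Theorem mainTheorem13 (X : Type) (d : X -> X -> R) (f : nat -> X -> X) (m : nat) :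
  is_metric d -> compact_space d ->
  (0 < m)%nat ->
  (forall i, continuous d (f i)) -> (forall i, surjective (f i)) ->
  commutative_seq f -> periodic_seq f m ->
  weakly_mixing d f -> totally_transitive d f.
Proof.
  intros Hmet Hcpt Hm Hc Hs Hcom Hp Hw k Hk U V HU HV HnU HnV.
  set (l := flat_map (fun s => map (fun i => (U, fun y => V (fcomp f s i y)))
               (seq 0 k)) (seq 0 m)).
  destruct (filter_lemma d f Hc Hcom Hw l) as [A [B [HA [HB [HnA [HnB Himp]]]]]].
  { intros p Hp'. unfold l in Hp'. apply in_flat_map in Hp' as [s [_ Hs']].
    apply in_map_iff in Hs' as [i [Hi _]]. subst p; simpl.
    split; [|split; [|split]]; auto.
    - apply preimage_open; auto. apply fcomp_cont; auto.
    - destruct HnV as [v Hv]. destruct (fcomp_surj f Hs s i v) as [w Hw'].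
      exists w; congruence. }
  { destruct HnU as [u _]; exists u; auto. }
  destruct (Hw A A B B HA HA HB HB HnA HnA HnB HnB) as [t [Ht [Hmt _]]].
  destruct (div_up k t Hk Ht) as [i [q [Hi [Htq Hq]]]].
  assert (Hin : In (U, fun y => V (fcomp f (t mod m) i y)) l).
  { unfold l. apply in_flat_map. exists (t mod m)%nat. split.
    - apply in_seq. pose proof (Nat.mod_upper_bound t m ltac:(lia)). lia.
    - apply in_map_iff. exists i; split; auto. apply in_seq; lia. }
  destruct (Himp t Hmt _ Hin) as [x [Hx1 Hx2]]; simpl in *.
  exists q; split; auto. exists x; split; auto.
  rewrite block_fcomp, <- Htq, fcomp_add. simpl.
  rewrite (fcomp_mod f m Hm Hp t i). auto.
Qed.
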